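(* Let $\lambda\in(0,1)$ and let $G$ be a finite simple connected graph with $n\ge 2$ vertices. Then $$Mt^{e}_{\lambda}(G)\;\le\;\max_{1\le D\le n-1}\left[\frac{\lambda\left[1-(D+1)\lambda^{D}+D\lambda^{D+1}\right]}{(\lambda-1)^2}+(n-D-1)D\lambda^{D}\right].$$ Moreover, equality holds for a broom on $n$ vertices, the maximum of $t^e_\lambda$ over its vertices being attained at its starting vertex.
   Context: $d(u,v)$ denotes graph distance. For a vertex $u$ of $G=(V,E)$, $t^{e}_{\lambda}(u)=\sum_{v\in V\setminus\{u\}} d(u,v)\lambda^{d(u,v)}$, and $Mt^{e}_{\lambda}(G)=\max\{t^{e}_{\lambda}(u):u\in V\}$. A broom on $n$ vertices (with parameter $D$, $1\le D\le n-1$) is the graph consisting of a path $u=v_0v_1\cdots v_D$ together with $n-D-1$ further vertices, each adjacent only to $v_{D-1}$; the vertex $u=v_0$ is called its starting vertex. *)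

(* Defs.v *)
From HB Require Import structures.
From mathcomp Require Import all_boot all_order all_algebra.
Set Implicit Arguments. Unset Strict Implicit. Unset Printing Implicit Defensive.
Import Order.TTheory GRing.Theory Num.Theory.

(* A graph is an edge relation e : rel T on a finite vertex type T
   (simple = symmetric and irreflexive). *)

(* For a
   connected graph this is the usual shortest-path distance (a shortest
   walk has fewer than #|T| edges). *)
Definition gdist (T : finType) (e : rel T) (u v : T) : nat :=
  find (fun k => [exists p : k.-tuple T, path e u p && (last u p == v)])
       (iota 0 #|T|).

Local Open Scope ring_scope.

Definition te (R : realFieldType) (lam : R) (T : finType) (e : rel T) (u : T) : R :=
  \sum_(v : T | v != u) (gdist e u v)%:R * lam ^+ gdist e u v.

(* Mt^e_lambda(G) = max over vertices (all values are >= 0, and T is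
   nonempty in the theorem, so the default 0 is harmless). *)
Definition Mte (R : realFieldType) (lam : R) (T : finType) (e : rel T) : R :=
  \big[Num.max/0]_(u : T) te lam e u.

Definition broom_val (R : realFieldType) (lam : R) (n D : nat) : R :=
  lam * (1 - (D.+1)%:R * lam ^+ D + D%:R * lam ^+ D.+1) / (lam - 1) ^+ 2
  + ((n - D - 1) * D)%:R * lam ^+ D.

(* max_{1 <= D <= n-1} broom_val (all values > 0 for 0 < lam < 1). *)
Definition broom_bound (R : realFieldType) (lam : R) (n : nat) : R :=
  \big[Num.max/0]_(1 <= D < n) broom_val lam n D.

(* The broom on vertex set {0,...,n-1} with parameter D (1 <= D <= n-1):
   path 0 - 1 - ... - D, and vertices D+1, ..., n-1 adjacent only to D-1.
   Starting vertex is 0. *)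
Definition broom_rel (n D : nat) : rel 'I_n :=
  fun i j =>
    let a := nat_of_ord i in let b := nat_of_ord j in
    [|| (a.+1 == b) && (b <= D)%N,
        (b.+1 == a) && (a <= D)%N,
        (D < a)%N && (b == D.-1)
      | (D < b)%N && (a == D.-1)].
Arguments broom_rel : clear implicits.

(* Main.v *)
Require Import Defs.
From mathcomp Require Import all_boot all_order all_algebra.
From mathcomp Require Import zify ring lra.
Import Order.TTheory GRing.Theory Num.Theory.

Module MA.
Set Implicit Arguments. Unset Strict Implicit. Unset Printing Implicit Defensive.

Section G.
Variables (T : finType) (e : rel T) (u : T).

Definition W (k : nat) (v : T) := exists p : seq T, [/\ size p = k, path e u p & last u p = v].

Lemma PW k v : [exists p : k.-tuple T, path e u p && (last u p == v)] <-> W k v.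
Proof.
split.
  by case/existsP=> p /andP[pp /eqP lp]; exists p; rewrite size_tuple.
case=> p [sp pp lp]; apply/existsP.
have sp' : size p == k by apply/eqP.
by exists (Tuple sp'); rewrite /= pp lp eqxx.
Qed.

Lemma gd_le j v : W j v -> (j < #|T|)%N -> (gdist e u v <= j)%N.
Proof.
move=> Wj jn; rewrite leqNgt; apply/negP => lt.
have := before_find 0%N lt; rewrite nth_iota // add0n.
by move/negbT/negP; apply; apply/PW.
Qed.

Lemma gd_walk v : (exists j, (j < #|T|)%N /\ W j v) -> W (gdist e u v) v /\ (gdist e u v < #|T|)%N.
Proof.
case=> j [jn Wj].
set P := (fun k => [exists p : k.-tuple T, path e u p && (last u p == v)]).
have hP : has P (iota 0 #|T|).
  by apply/hasP; exists j; [rewrite mem_iota | apply/PW].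
have := has_find P (iota 0 #|T|); rewrite hP size_iota => /esym lt.
split=> //.
have := nth_find 0%N hP; rewrite nth_iota // add0n => /PW.
done.
Qed.

Lemma conn_W v : connect e u v -> exists j, (j < #|T|)%N /\ W j v.
Proof.
case/connectP=> p pp ->.
case: (shortenP pp) => p' pp' up' _.
exists (size p'); split; last by exists p'; split.
have h : #|u :: p'| = size (u :: p') by apply/card_uniqP. have := max_card (mem (u :: p')). by rewrite h.
Qed.

Lemma W0 : W 0 u.
Proof. by exists [::]. Qed.

Lemma W0_eq v : W 0 v -> v = u.
Proof. by case=> p [sp _]; case: p sp => //= _ ->. Qed.

Lemma W_ext k v w : W k v -> e v w -> W k.+1 w.
Proof.
case=> p [sp pp lp] evw; exists (rcons p w).
by rewrite size_rcons rcons_path last_rcons sp pp lp evw.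
Qed.

End G.
Section G2.
Variables (T : finType) (e : rel T) (u : T).
Hypothesis conn : forall v, connect e u v.
Local Notation d := (gdist e u).

Lemma gd_spec v : W e u (d v) v /\ (d v < #|T|)%N.
Proof. exact/gd_walk/conn_W. Qed.

Lemma gd_min j v : W e u j v -> (d v <= j)%N.
Proof.
move=> Wj; case: (ltnP j #|T|) => jn; first exact: gd_le.
by apply: leq_trans jn; apply: ltnW; case: (gd_spec v).
Qed.

Lemma gd_u : d u = 0%N.
Proof. by apply/eqP; rewrite -leqn0; apply/gd_min/W0. Qed.

Lemma gd_eq0 v : d v = 0%N -> v = u.
Proof. by case: (gd_spec v) => + _ => /[swap] ->; apply: W0_eq. Qed.

Lemma gd_level v j : (j <= d v)%N -> exists w, d w = j.
Proof.
move=> jd; case: (gd_spec v) => [[p [sp pp lp]] _].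
exists (last u (take j p)).
have Wt : W e u j (last u (take j p)).
  exists (take j p); split=> //; first by rewrite size_take sp; case: ltnP jd; lia.
  by move: pp; rewrite -{1}(cat_take_drop j p) cat_path => /andP[].
apply/eqP; rewrite eqn_leq gd_min //= leqNgt; apply/negP => lt.
case: (gd_spec (last u (take j p))) => [[q [sq pq lq]] _].
have : W e u (d (last u (take j p)) + (d v - j)) v.
  exists (q ++ drop j p); split.
  - by rewrite size_cat size_drop sq sp.
  - rewrite cat_path pq lq /=.
    by move: pp; rewrite -{1}(cat_take_drop j p) cat_path => /andP[].
  - by rewrite last_cat lq -last_cat cat_take_drop.
move/gd_min; lia.
Qed.

End G2.

End MA.
Import MA.

Module MB.
Set Implicit Arguments. Unset Strict Implicit. Unset Printing Implicit Defensive.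
Local Open Scope ring_scope.

Section R.
Variables (R : realFieldType) (lam : R).
Definition f (k : nat) : R := k%:R * lam ^+ k.
Definition S (D : nat) : R := \sum_(1 <= k < D.+1) f k.

Lemma S_rec D : S D.+1 = S D + f D.+1.
Proof. by rewrite /S big_nat_recr. Qed.

Lemma S_closed D : lam != 1 -> S D =
  lam * (1 - (D.+1)%:R * lam ^+ D + D%:R * lam ^+ D.+1) / (lam - 1) ^+ 2.
Proof.
move=> l1; have l1' : (lam - 1) ^+ 2 != 0 by rewrite expf_neq0 // subr_eq0.
apply: (mulIf l1'); rewrite divfK //.
elim: D => [|D IH]; first by rewrite /S big_geq //; ring.
rewrite S_rec mulrDl IH /f.
rewrite !exprS !mulrSr; ring.
Qed.

Lemma seq_bound M E (s : seq nat) : (forall x, x \in s -> f x <= M) ->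
  (forall k, (1 <= k <= E)%N -> k \in s) ->
  \sum_(x <- s) f x <= S E + (size s - E)%:R * M.
Proof.
elim: E s => [|E IH] s hM hk.
  rewrite /S big_geq // add0r subn0 mulr_natl.
  elim: s hM {hk} => [|x s IHs] hM; first by rewrite big_nil mulr0n.
  rewrite big_cons /= mulrS lerD ?hM ?mem_head //.
  by apply: IHs => y ys; apply: hM; rewrite inE ys orbT.
have hin : (E.+1 \in s) by apply: hk; rewrite leqnn andbT.
rewrite (perm_big _ (perm_to_rem hin)) big_cons.
have := IH (rem E.+1 s).
rewrite size_rem // S_rec => h.
rewrite (_ : ((size s).-1 - E = size s - E.+1)%N) in h; last by lia.
rewrite [S E + f _]addrC -addrA lerD2l; apply: h.
- by move=> x /mem_rem; apply: hM.
- move=> k kE; have : k \in E.+1 :: rem E.+1 s.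
    by rewrite -(perm_mem (perm_to_rem hin)) hk //; lia.
  by rewrite inE; case: eqP => //; lia.
Qed.

Lemma argmax_nat (g : nat -> R) E : (1 <= E)%N ->
  exists k0, (1 <= k0 <= E)%N /\ forall k, (1 <= k <= E)%N -> g k <= g k0.
Proof.
elim: E => // E IH _; case: (posnP E) => [->|E0].
  by exists 1%N; split=> // k; case: k => // [[|]].
case: (IH E0) => k0 [k0E hk0].
case: (lerP (g E.+1) (g k0)) => h.
  exists k0; split; first lia.
  move=> k kE; case: (ltnP k E.+1) => kE'; first by apply: hk0; lia.
  by have -> : k = E.+1 by lia.
exists E.+1; split; first lia.
move=> k kE; case: (ltnP k E.+1) => kE'.
  by apply: le_trans (ltW h); apply: hk0; lia.
by have -> : k = E.+1 by lia.
Qed.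

End R.

End MB.
Import MB.

Module MC.
Set Implicit Arguments. Unset Strict Implicit. Unset Printing Implicit Defensive.
Local Open Scope ring_scope.

Lemma bv_eq (R : realFieldType) (lam : R) n D : lam != 1 ->
  broom_val lam n D = S lam D + (n - D - 1)%:R * f lam D.
Proof.
by move=> l1; rewrite /broom_val S_closed // /f natrM mulrA.
Qed.

Lemma S_mono (R : realFieldType) (lam : R) k0 E : (k0 <= E)%N ->
  (forall k, (1 <= k <= E)%N -> f lam k <= f lam k0) ->
  S lam E <= S lam k0 + (E - k0)%:R * f lam k0.
Proof.
move=> kE hk; rewrite /S (big_cat_nat _ (n := k0.+1)) //=.
rewrite lerD2l mulr_natl (_ : (E - k0 = E.+1 - k0.+1)%N); last lia.
rewrite -sumr_const_nat.
apply: ler_sum_nat => i /andP[a b]; apply: hk; lia.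
Qed.

Lemma te_bound (R : realFieldType) (lam : R) n (T : finType) (e : rel T) (u : T) :
  lam != 1 -> (2 <= n)%N -> #|T| = n -> (forall v, connect e u v) ->
  exists k0, [/\ (1 <= k0)%N, (k0 <= n - 1)%N & te lam e u <= broom_val lam n k0].
Proof.
move=> l1 n2 Tn conn.
set d := gdist e u.
set s := [seq d v | v <- enum (predC1 u)].
have tes : te lam e u = \sum_(x <- s) f lam x.
  by rewrite big_map big_enum /=.
have sz : size s = (n - 1)%N.
  rewrite size_map -cardE cardC1 Tn; lia.
have : (0 < #|predC1 u|)%N by rewrite cardC1; lia.
case/card_gt0P => w /= wu.
case: (arg_maxnP d (erefl (predT u))) => vm _ hvm.
set E := d vm.
have dlt v : (d v < n)%N by rewrite -Tn; case: (gd_spec conn v).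
have E1 : (1 <= E)%N.
  have := hvm w isT; rewrite -/E; case: (posnP (d w)) => [/(gd_eq0 conn) h|]; last lia.
  by move: wu; rewrite h inE eqxx.
case: (argmax_nat (f lam) E1) => k0 [k0E hk0].
exists k0; split; [lia | have := dlt vm; rewrite -/E; lia |].
rewrite tes bv_eq //.
apply: le_trans (seq_bound (M := f lam k0) (E := E) _ _) _.
- move=> x /mapP [v]; rewrite mem_enum /= => vu ->; apply: hk0.
  have := hvm v isT; rewrite /= -/E.
  case: (posnP (d v)) => [/(gd_eq0 conn) h|]; last lia.
  by move: vu; rewrite h inE eqxx.
- move=> k kE; have [|w' dw] := gd_level conn (v := vm) (j := k); first by rewrite -/E; case/andP: kE.
  rewrite -dw; apply: map_f; rewrite mem_enum inE; apply/negP => /eqP h.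
  move: dw; rewrite h gd_u //; lia.
rewrite sz.
apply: le_trans (lerD (S_mono (k0 := k0) (E := E) _ hk0) (lexx _)) _; first lia.
rewrite -addrA lerD2l -mulrDl -natrD.
have -> : (E - k0 + (n - 1 - E) = n - k0 - 1)%N by have := dlt vm; rewrite -/E; lia.
done.
Qed.

End MC.
Import MC.

Module MD.
Set Implicit Arguments. Unset Strict Implicit. Unset Printing Implicit Defensive.

Section Broom.
Variables (n D : nat).
Hypothesis D1 : (1 <= D)%N.
Hypothesis Dn : (D < n)%N.
Local Notation B := (broom_rel n D).

Lemma broom_sym : symmetric B.
Proof.
move=> x y; rewrite /broom_rel.
by case: (_ && _); case: (_ && _); case: (_ && _); case: (_ && _).
Qed.

Lemma broom_edge x y : B x y -> (minn y D <= (minn x D).+1)%N.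
Proof.
rewrite /broom_rel => /or4P [] /andP [/eqP a b]; lia.
Qed.

Lemma broom_lower x p : path B x p -> (minn (last x p) D <= minn x D + size p)%N.
Proof.
elim: p x => [|y p IH] x /=; first by rewrite addn0.
case/andP => exy /IH h; have := broom_edge exy; lia.
Qed.

Variable u : 'I_n.
Hypothesis u0 : nat_of_ord u = 0%N.
Let io i : 'I_n := insubd u i.
Lemma ioK i : (i < n)%N -> nat_of_ord (io i) = i.
Proof. by move=> h; rewrite /io val_insubd h. Qed.

Lemma broom_walk_le i : (i <= D)%N -> W B u i (io i).
Proof.
elim: i => [|i IH] iD.
  have -> : io 0 = u by apply: val_inj; rewrite /= ioK ?u0 //; lia.
  exact: W0.
apply: W_ext (IH _) _; first lia.
rewrite /broom_rel !ioK; lia.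
Qed.

Lemma broom_walk (v : 'I_n) : W B u (minn v D) v.
Proof.
case: (leqP v D) => vD.
  by rewrite -{2}(valKd u v); apply: broom_walk_le.
rewrite -[X in W _ _ X _](prednK D1).
apply: W_ext (broom_walk_le _) _; first lia.
rewrite /broom_rel ioK; last lia.
have -> : (D.-1.+1 = D) by lia.
by rewrite vD eqxx !orbT.
Qed.

Lemma broom_conn x y : connect B x y.
Proof.
have cu v : connect B u v.
  case: (broom_walk v) => p [_ pp lp]; apply/connectP; exists p => //.
have cu2 v : connect B v u by rewrite (sym_connect_sym broom_sym).
exact: connect_trans (cu2 x) (cu y).
Qed.

Lemma broom_gd (v : 'I_n) : gdist B u v = minn v D.
Proof.
apply/eqP; rewrite eqn_leq (gd_min (fun w => broom_conn u w) (broom_walk v)) /=.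
case: (gd_spec (e := B) (u := u) (fun w => broom_conn u w) v) => [[p [sp pp lp]] _].
have := broom_lower pp; rewrite lp u0 sp; lia.
Qed.

Local Open Scope ring_scope.
Lemma broom_te (R : realFieldType) (lam : R) : lam != 1 ->
  te lam B u = broom_val lam n D.
Proof.
move=> l1; rewrite bv_eq // /te.
under eq_bigr do rewrite broom_gd.
rewrite (eq_bigl (fun v : 'I_n => nat_of_ord v != 0%N)); last first.
  by move=> v; rewrite -val_eqE /= u0.
rewrite -(big_mkord (fun i => i != 0%N) (fun i => (minn i D)%:R * lam ^+ minn i D)).
rewrite big_ltn_cond; last lia.
rewrite /= [in LHS]big_nat_cond (eq_bigl (fun i => (1 <= i < n)%N && true)); last first.
  by move=> i; rewrite andbT; case: i => [|i] //=; rewrite andbT.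
rewrite -big_nat_cond (big_cat_nat _ (n := D.+1)) //=.
congr (_ + _).
  by apply: eq_big_nat => i iD; rewrite /f; have -> : minn i D = i by lia.
rewrite (eq_big_nat _ _ (F2 := fun => f lam D)); last first.
  by move=> i iD; rewrite /f; have -> : minn i D = D by lia.
by rewrite sumr_const_nat mulr_natl; congr (_ *+ _); lia.
Qed.

End Broom.

End MD.
Import MD.

Set Implicit Arguments. Unset Strict Implicit. Unset Printing Implicit Defensive.
Local Open Scope ring_scope.

Lemma bv_le_bb (R : realFieldType) (lam : R) n k : (1 <= k < n)%N ->
  broom_val lam n k <= broom_bound lam n.
Proof.
move=> kn; rewrite /broom_bound.
by apply: (le_bigmax_seq _ _ (fun _ => true)); rewrite ?mem_index_iota.
Qed.

Lemma bb_ge0 (R : realFieldType) (lam : R) n : 0 <= broom_bound lam n.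
Proof.
rewrite /broom_bound; elim: (index_iota 1 n) => [|x r IH]; first by rewrite big_nil.
by rewrite big_cons le_max IH orbT.
Qed.

Lemma part1 (R : realFieldType) (lam : R) n (T : finType) (e : rel T) :
  lam != 1 -> (2 <= n)%N -> #|T| = n -> (forall u v : T, connect e u v) ->
  Mte lam e <= broom_bound lam n.
Proof.
move=> l1 n2 Tn conn; rewrite /Mte; apply: bigmax_le; first exact: bb_ge0.
move=> u _; case: (te_bound l1 n2 Tn (conn u)) => k0 [k1 kn h].
apply: le_trans h _; apply: bv_le_bb; lia.
Qed.

Unset Implicit Arguments. Set Strict Implicit. Set Printing Implicit Defensive.
Theorem theorem5 (R : realFieldType) (lam : R) (n : nat) (T : finType) (e : rel T) :
  0 < lam < 1 -> (2 <= n)%N -> #|T| = n ->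
  symmetric e -> irreflexive e -> (forall u v : T, connect e u v) ->
  Mte lam e <= broom_bound lam n /\
  (exists D : nat, [/\ (1 <= D)%N, (D <= n - 1)%N,
     Mte lam (broom_rel n D) = broom_bound lam n &
     forall u : 'I_n, nat_of_ord u = 0%N -> te lam (broom_rel n D) u = Mte lam (broom_rel n D)]).
Proof.
move=> /andP[l0 l1'] n2 Tn _ _ conn.
have l1 : lam != 1 by rewrite lt_eqF.
split; first exact: part1.
have n1 : (1 <= n - 1)%N by lia.
case: (argmax_nat (broom_val lam n) n1) => D [DE hD].
have D1 : (1 <= D)%N by lia.
have Dn : (D < n)%N by lia.
have n0 : (0 < n)%N by lia.
pose u0 : 'I_n := Ordinal n0.
have teu : te lam (broom_rel n D) u0 = broom_val lam n D.
  by apply: (broom_te D1 Dn (u := u0)).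
have bvge0 : 0 <= broom_val lam n D.
  rewrite -teu /te; apply: sumr_ge0 => i _; apply: mulr_ge0 => //.
  by apply: exprn_ge0; apply: ltW.
have bbD : broom_bound lam n = broom_val lam n D.
  apply/le_anti; rewrite bv_le_bb ?andbT //; last lia.
  rewrite /broom_bound big_seq; apply: bigmax_le => // k.
  rewrite mem_index_iota => hk; apply: hD; lia.
have Mt : Mte lam (broom_rel n D) = broom_bound lam n.
  apply/le_anti; rewrite part1 //=.
  - rewrite bbD -teu /Mte; exact: (le_bigmax _ (fun u => te lam (broom_rel n D) u) u0).
  - by rewrite card_ord.
  - by move=> x y; apply: (broom_conn D1 Dn (u := u0)).
exists D; split=> //; first lia.
move=> u hu; rewrite Mt bbD; exact: (broom_te D1 Dn hu).
Qed.
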